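(* Let $X$ be a real Banach space with the fixed point property, and let $f:X\to X$ be nonexpansive and real analytic. If $f$ has more than one fixed point, then the set of fixed points of $f$ is unbounded.
   Context: $X$ has the fixed point property if for every nonempty closed, bounded, convex $C\subset X$ and every nonexpansive $g:C\to C$, $g$ has a fixed point in $C$. Nonexpansive: $\|f(x)-f(y)\|\le\|x-y\|$. Real analytic (weak sense): for all $x,y\in X$ and $z^*\in X^*$, the function $t\mapsto z^*(f(x+ty))$ is real analytic on $\mathbb{R}$. *)

(* Defs.v *)
From HB Require Import structures.
From mathcomp Require Import all_boot all_order all_algebra.
From mathcomp Require Import all_classical all_reals all_analysis.
Set Implicit Arguments. Unset Strict Implicit. Unset Printing Implicit Defensive.
Import Order.TTheory GRing.Theory Num.Theory.
Import numFieldNormedType.Exports.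
Local Open Scope classical_set_scope.
Local Open Scope ring_scope.

Section Defs.
Context {R : realType} {X : normedModType R}.

Definition convex_subset (C : set X) : Prop :=
  forall x y, C x -> C y -> forall t : R, 0 <= t -> t <= 1 ->
    C (t *: x + (1 - t) *: y).

Definition bounded_subset (C : set X) : Prop :=
  exists M : R, forall x, C x -> `|x| <= M.

Definition nonexpansive_on (C : set X) (g : X -> X) : Prop :=
  forall x y, C x -> C y -> `|g x - g y| <= `|x - y|.

(* A map C -> C is
   represented by g : X -> X with g @` C `<=` C (values outside C irrelevant). *)
Definition fixed_point_property : Prop :=
  forall (C : set X) (g : X -> X),
    C !=set0 -> closed C -> bounded_subset C -> convex_subset C ->
    g @` C `<=` C -> nonexpansive_on C g ->
    exists2 x, C x & g x = x.

Definition nonexpansive (f : X -> X) : Prop :=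
  forall x y, `|f x - f y| <= `|x - y|.

Definition dual_functional (z : X -> R) : Prop :=
  (forall (a : R) (u v : X), z (a *: u + v) = a * z u + z v) /\ continuous z.

End Defs.

Definition real_analytic {R : realType} (h : R -> R) : Prop :=
  forall t0 : R, exists r : R, 0 < r /\ exists a : nat -> R,
    forall t : R, `|t - t0| < r ->
      (fun N : nat => \sum_(0 <= n < N) a n * (t - t0) ^+ n) @ \oo --> h t.

Definition weakly_real_analytic {R : realType} {X : normedModType R}
    (f : X -> X) : Prop :=
  forall (x y : X) (z : X -> R), dual_functional z ->
    real_analytic (fun t : R => z (f (x + t *: y))).

(* Main.v *)
Require Import Defs.
From HB Require Import structures.
From mathcomp Require Import all_boot all_order all_algebra.
From mathcomp Require Import all_classical all_reals all_analysis.
From mathcomp Require Import ring lra.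
Import Order.TTheory GRing.Theory Num.Theory.
Import numFieldNormedType.Exports.
Local Open Scope classical_set_scope.
Local Open Scope ring_scope.

Set Implicit Arguments. Unset Strict Implicit. Unset Printing Implicit Defensive.

Section HahnBanach.
Context {R : realType} {V : lmodType R}.
Variable p : V -> R.
Hypothesis psub : forall x y, p (x + y) <= p x + p y.
Hypothesis phom : forall (c : R) x, 0 < c -> p (c *: x) <= c * p x.
Variable v0 : V.

Lemma phom_ge (c : R) x : 0 < c -> c * p x <= p (c *: x).
Proof.
move=> c0; have c0' : 0 < c^-1 by rewrite invr_gt0.
have := @phom c^-1 (c *: x) c0'.
rewrite scalerA mulVf ?gt_eqF // scale1r => h.
by rewrite -ler_pdivlMl.
Qed.

Lemma phomE (c : R) x : 0 < c -> p (c *: x) = c * p x.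
Proof. by move=> c0; apply/eqP; rewrite eq_le phom // phom_ge. Qed.

Lemma p0 : p 0 = 0.
Proof.

have h2 := @phomE 2 (0 : V) (ltr0n R 2).
rewrite scaler0 in h2.
have : p 0 = 2 * p 0 by [].
move=> e; apply/eqP; rewrite eq_le; apply/andP; split; lra.
Qed.

Lemma p_opp x : 0 <= p x + p (- x).
Proof. by rewrite -p0 -(subrr x); apply: psub. Qed.

Definition okG (G : set (V * R)) :=
  [/\ (forall x r s, G (x, r) -> G (x, s) -> r = s),
      (forall (c : R) x r y s, G (x, r) -> G (y, s) -> G (c *: x + y, c * r + s)),
      (forall x r, G (x, r) -> r <= p x) &
      (forall x r, G (x, r) -> G (v0, p v0))].

Lemma okG_chain : forall F : set (set (V * R)),
  F `<=` okG -> total_on F subset -> okG (\bigcup_(X in F) X).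
Proof.
move=> F FP tot; split.
- move=> x r s [G1 FG1 h1] [G2 FG2 h2].
  have [s12|s21] := tot _ _ FG1 FG2.
  + by case: (FP _ FG2) => fn _ _ _; apply: (fn x) => //; apply: s12.
  + by case: (FP _ FG1) => fn _ _ _; apply: (fn x) => //; apply: s21.
- move=> c x r y s [G1 FG1 h1] [G2 FG2 h2].
  have [s12|s21] := tot _ _ FG1 FG2.
  + by exists G2 => //; case: (FP _ FG2) => _ ln _ _; apply: ln => //; apply: s12.
  + by exists G1 => //; case: (FP _ FG1) => _ ln _ _; apply: ln => //; apply: s21.
- by move=> x r [G1 FG1 h1]; case: (FP _ FG1) => _ _ dm _; apply: dm h1.
- by move=> x r [G1 FG1 h1]; exists G1 => //; case: (FP _ FG1) => _ _ _ sd; apply: sd h1.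
Qed.

Definition G0 : set (V * R) := [set z | exists c : R, z = (c *: v0, c * p v0)].

Lemma okG0 : okG G0.
Proof.
split.
- move=> x r s [c1 [e1 e2]] [c2 [e3 e4]]; subst.
  have [->|v0n0] := eqVneq v0 0.
    by rewrite p0 !mulr0.
  have : (c1 - c2) *: v0 = 0 by rewrite scalerBl e3 subrr.
  by move/eqP; rewrite scaler_eq0 (negPf v0n0) orbF subr_eq0 => /eqP ->.
- move=> c x r y s [c1 [-> ->]] [c2 [-> ->]].
  by exists (c * c1 + c2); rewrite scalerDl scalerA mulrDl mulrA.
- move=> x r [c [-> ->]].
  have [c0|c0|->] := ltgtP c 0; last by rewrite scale0r mul0r p0.
  + have c0' : 0 < - c by rewrite oppr_gt0.
    have h := @phom_ge (- c) (- v0) c0'.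
    rewrite scaleNr scalerN opprK in h.
    have := p_opp v0.
    move=> hh; apply: le_trans h.
    rewrite mulNr -mulrN; rewrite ler_nM2l //.
    by rewrite lerNl -subr_ge0 opprK addrC.
  + by rewrite phomE.
- by move=> x r _; exists 1; rewrite scale1r mul1r.
Qed.

Lemma HB_exists : exists phi : V -> R,
  [/\ (forall (c : R) x y, phi (c *: x + y) = c * phi x + phi y),
      (forall x, phi x <= p x) & phi v0 = p v0].
Proof.
have [A [okA maxA]] := Zorn_bigcup okG_chain.
case: (okA) => Afun Alin Adom Aseed.
have [[z Az]|nA] := pselect (exists z, A z); last first.
  exfalso; apply: (maxA G0) => //; last exact: okG0.
  split; first by move=> z Az; exfalso; apply: nA; exists z.
  move=> h; apply: nA; exists (v0, p v0); apply: h; exists 1.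
  by rewrite scale1r mul1r.
case: z Az => z1 z2 Az.
have seed := Aseed _ _ Az.
have A00 : A (0, 0).
  have := Alin (-1) _ _ _ _ seed seed.
  by rewrite scaleN1r addNr mulN1r addNr.
have Ascale (c : R) y s : A (y, s) -> A (c *: y, c * s).
  by move=> h; have := Alin c _ _ _ _ h A00; rewrite !addr0.
have tot : forall x, exists r, A (x, r).
  move=> x; apply/not_existsP => nx.
  pose S := [set e | exists y s, A (y, s) /\ e = s - p (y - x)].
  have Sne : S !=set0 by exists (0 - p (0 - x)); exists 0, 0.
  have Sub : forall e, S e -> e <= p x.
    move=> e [y [s [Ays ->]]].
    have h1 := Adom _ _ Ays.
    have h2 := psub (y - x) x; rewrite subrK in h2.
    lra.
  have hS : has_sup S by split => //; exists (p x) => e /Sub.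
  pose alpha := sup S.
  have low : forall y s, A (y, s) -> s - p (y - x) <= alpha.
    by move=> y s Ays; apply: sup_upper_bound => //; exists y, s.
  have upp : forall y s, A (y, s) -> alpha <= p (y + x) - s.
    move=> y' s' Ays'; apply: ge_sup => // e [y [s [Ays ->]]].
    have h1 := Adom _ _ (Alin 1 _ _ _ _ Ays Ays').
    rewrite scale1r mul1r in h1.
    have h2 := psub (y - x) (y' + x).
    have e3 : y - x + (y' + x) = y + y'.
      by rewrite [y' + x]addrC addrA subrK.
    rewrite e3 in h2; lra.
  pose B := [set w | exists c y s, A (y, s) /\ w = (y + c *: x, s + c * alpha)].
  apply: (maxA B).
    split.
      move=> [y s] Ays; exists 0, y, s; split => //.
      by rewrite scale0r mul0r !addr0.
    move=> BA; apply: (nx alpha).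
    have : B (x, alpha).
      by exists 1, 0, 0; split => //; rewrite scale1r mul1r !add0r.
    by move/BA.
  split.
  - move=> w r1 r2 [c1 [y1 [s1 [A1 [e1 e2]]]]] [c2 [y2 [s2 [A2 [e3 e4]]]]].
    subst.
    have [ec|nec] := eqVneq c1 c2.
      subst; move: e3 => /addIr ey; subst.
      by rewrite (Afun _ _ _ A1 A2).
    exfalso; apply: (nx ((c1 - c2)^-1 * (s2 - s1))).
    have A21 := Alin (-1) _ _ _ _ A1 A2.
    rewrite scaleN1r mulN1r in A21.
    have e5 : - y1 + y2 = (c1 - c2) *: x.
      have -> : y2 = y1 + c1 *: x - c2 *: x by rewrite e3 addrK.
      by rewrite scalerBl -addrA addKr.
    have e6 : (c1 - c2)^-1 *: (- y1 + y2) = x.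
      by rewrite e5 scalerA mulVf ?scale1r // subr_eq0.
    have := Ascale ((c1 - c2)^-1) _ _ A21.
    by rewrite e6 [- s1 + s2]addrC.
  - move=> k w1 r1 w2 r2 [c1 [y1 [s1 [A1 [-> ->]]]]] [c2 [y2 [s2 [A2 [-> ->]]]]].
    exists (k * c1 + c2), (k *: y1 + y2), (k * s1 + s2); split.
      exact: Alin.
    congr (_, _).
      by rewrite scalerDr scalerDl scalerA; rewrite !addrA; congr (_ + _); rewrite -!addrA; congr (_ + _); rewrite addrC.
    by rewrite mulrDr mulrDl mulrA; rewrite !addrA; congr (_ + _); rewrite -!addrA; congr (_ + _); rewrite addrC.
  - move=> w r [c [y [s [Ays [-> ->]]]]].
    have [c0|c0|->] := ltgtP c 0; last by rewrite scale0r mul0r !addr0; apply: Adom.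
    + pose c' := - c.
      have c'0 : 0 < c' by rewrite oppr_gt0.
      have h := low _ _ (Ascale (c'^-1) _ _ Ays).
      have h2 := phom_ge (c'^-1 *: y - x) c'0.
      have e1 : c' *: (c'^-1 *: y - x) = y + c *: x.
        by rewrite scalerBr scalerA mulfV ?gt_eqF // scale1r /c' scaleNr opprK.
      rewrite e1 in h2.
      have e2 : c' * (c'^-1 * s) = s by rewrite mulrA mulfV ?gt_eqF // mul1r.
      have : c * alpha = - (c' * alpha) by rewrite /c' mulNr opprK.
      move=> ->.
      have h3 := ler_wpM2l (ltW c'0) h.
      rewrite mulrBr e2 in h3.
      lra.
    + have h := upp _ _ (Ascale (c^-1) _ _ Ays).
      have h2 := phom_ge (c^-1 *: y + x) c0.
      have e1 : c *: (c^-1 *: y + x) = y + c *: x.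
        by rewrite scalerDr scalerA mulfV ?gt_eqF // scale1r.
      rewrite e1 in h2.
      have e2 : c * (c^-1 * s) = s by rewrite mulrA mulfV ?gt_eqF // mul1r.
      have h3 := ler_wpM2l (ltW c0) h.
      rewrite mulrBr e2 in h3.
      lra.
  - move=> w r _; exists 0, v0, (p v0); split => //.
    by rewrite scale0r mul0r !addr0.
have [phi Hphi] := choice tot.
exists phi; split.
- move=> c x y; have := Alin c _ _ _ _ (Hphi x) (Hphi y).
  by move=> h; apply: (Afun _ _ _ (Hphi _) h).
- by move=> x; apply: Adom (Hphi x).
- by apply: Afun (Hphi v0) seed.
Qed.

End HahnBanach.


Section PS.
Context {R : realType}.

Lemma ps_zero (b : nat -> R) (r r' : R) (E : R -> R) :
  0 < r -> 0 < r' ->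
  (forall x, `|x| < r ->
     (fun N : nat => \sum_(0 <= n < N) b n * x ^+ n) @ \oo --> E x) ->
  (forall x, - r' < x -> x < 0 -> E x = 0) ->
  forall n, b n = 0.
Proof.
move=> r0 r'0 HE HZ.
pose rho := r / 2.
have rho0 : 0 < rho by rewrite divr_gt0.
have rhor : `|rho| < r by rewrite gtr0_norm // /rho; lra.
have [K0 HK0] : exists K0, forall N, `|\sum_(0 <= n < N) b n * rho ^+ n| <= K0.
  have := cvg_seq_bounded (cvgP _ (HE _ rhor)).
  case=> M [_ HM]; exists (M + 1) => N; apply: (HM (M+1)) => //; lra.
pose K := 2 * K0.
have K0ge : 0 <= K0 by apply: le_trans (HK0 0%N).
have Kge : 0 <= K by rewrite /K; lra.
have HK : forall m, `|b m| * rho ^+ m <= K.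
  move=> m; have h1 := HK0 m.+1; have h2 := HK0 m.
  rewrite big_nat_recr //= in h1.
  have -> : `|b m| * rho ^+ m = `|b m * rho ^+ m|.
    by rewrite normrM (ger0_norm (exprn_ge0 _ (ltW rho0))).
  have e : b m * rho ^+ m = (\sum_(0 <= i < m) b i * rho ^+ i + b m * rho ^+ m)
     - \sum_(0 <= i < m) b i * rho ^+ i by rewrite addrC addKr.
  rewrite e; apply: le_trans (ler_normB _ _) _; rewrite /K; lra.
elim/ltn_ind => n IH.
apply/eqP; rewrite -normr_le0; apply/ler_addgt0Pr => eps eps0; rewrite add0r.
pose q := Num.min (1/2) (Num.min (r' / (2 * rho)) (eps * rho ^+ n / (2 * K + 1))).
have rhon0 : 0 < rho ^+ n by rewrite exprn_gt0.
have q0 : 0 < q.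
  rewrite /q !lt_min; apply/and3P; split; first lra.
    by rewrite divr_gt0 //; lra.
  by rewrite divr_gt0 ?mulr_gt0 //; lra.
have q12 : q <= 1/2 by rewrite /q ge_min lexx.
have qr' : q <= r' / (2 * rho) by rewrite /q !ge_min lexx orbT.
have qeps : q <= eps * rho ^+ n / (2 * K + 1) by rewrite /q !ge_min lexx !orbT.
pose delta := q * rho.
have delta0 : 0 < delta by rewrite mulr_gt0.
have deltar' : delta < r'.
  rewrite /delta; have := ler_pM2r rho0; move=> h.
  have : q * rho <= r' / (2 * rho) * rho by rewrite ler_pM2r.
  have -> : r' / (2 * rho) * rho = r' / 2.
    by field; rewrite gt_eqF.
  lra.
have deltar : `|- delta| < r.
  rewrite normrN gtr0_norm //; rewrite /delta.
  have : q * rho <= 1/2 * rho by rewrite ler_pM2r.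
  rewrite /rho; lra.
pose x := - delta.
have term : forall m, `|b m * x ^+ m| <= K * q ^+ m.
  move=> m; rewrite normrM normrX normrN (gtr0_norm delta0) /delta exprMn mulrA.
  rewrite mulrAC; apply: ler_wpM2r; first by rewrite exprn_ge0 // ltW.
  exact: HK.
pose S N := \sum_(0 <= i < N) b i * x ^+ i.
have bound : forall N, `|S N - (if (n < N)%N then b n * x ^+ n else 0)| <=
   (if (n < N)%N then 2 * K * (q ^+ n.+1 - q ^+ N) else 0).
  elim=> [|N IHN].
    by rewrite /S big_geq // subr0 normr0.
  rewrite /S big_nat_recr //= -/(S N).
  case: (ltngtP n N) => hnN.
  - rewrite hnN in IHN; rewrite ltnS (ltnW hnN).
    have t := term N.
    have e : S N + b N * x ^+ N - b n * x ^+ n = (S N - b n * x ^+ n) + b N * x ^+ N.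
      by rewrite addrAC.
    rewrite e; apply: le_trans (ler_normD _ _) _.
    have hq : 0 <= q ^+ N by rewrite exprn_ge0 // ltW.
    have hh : 0 <= K * q ^+ N by rewrite mulr_ge0.
    have e2 : q ^+ N.+1 = q * q ^+ N by rewrite exprS.
    rewrite e2.
    have h3 : 2 * K * (q * q ^+ N) = 2 * q * (K * q ^+ N) by ring.
    have h4 : 2 * q * (K * q ^+ N) <= K * q ^+ N.
      by rewrite -[leRHS]mul1r ler_wpM2r //; lra.
    lra.
  - have h1 : (n < N.+1)%N = false by rewrite ltnS leqNgt hnN.
    have h2 : (n < N)%N = false by rewrite ltnNge (ltnW hnN).
    rewrite h1; rewrite h2 in IHN.
    by rewrite IH // mul0r addr0.
  - subst N; rewrite ltnn in IHN; rewrite ltnSn.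
    move: IHN; rewrite subr0 normr_le0 => /eqP ->.
    by rewrite add0r subrr normr0 subrr mulr0.
have HEx := HE x deltar.
have Ex0 : E x = 0 by apply: HZ; rewrite /x; lra.
have key : `|b n * x ^+ n| <= 2 * K * q ^+ n.+1.
  apply/ler_addgt0Pr => eta eta0.
  have := cvgr_dist_lt _ _ HEx _ eta0.
  case=> N0 _ HN0.
  pose N := maxn N0 n.+1.
  have hN := HN0 N (leq_maxl _ _).
  have b1 := bound N.
  have nN : (n < N)%N by rewrite leq_max ltnSn orbT.
  rewrite nN in b1.
  rewrite Ex0 sub0r normrN in hN.
  have hqN : 0 <= q ^+ N by rewrite exprn_ge0 // ltW.
  have hKq : 0 <= 2 * K * q ^+ N by rewrite mulr_ge0 // mulr_ge0.
  have : `|b n * x ^+ n| <= `|S N| + `|S N - b n * x ^+ n|.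
    have e : b n * x ^+ n = S N - (S N - b n * x ^+ n) by rewrite opprB addrC subrK.
    by rewrite {1}e; exact: ler_normB.
  rewrite mulrBr in b1.
  lra.
rewrite normrM normrX normrN (gtr0_norm delta0) /delta exprMn in key.
rewrite exprS in key.
have qn0 : 0 < q ^+ n by rewrite exprn_gt0.
have key2 : `|b n| * rho ^+ n <= 2 * K * q.
  have e : `|b n| * (q ^+ n * rho ^+ n) = (`|b n| * rho ^+ n) * q ^+ n by ring.
  have e2 : 2 * K * (q * q ^+ n) = (2 * K * q) * q ^+ n by ring.
  by rewrite e e2 ler_pM2r in key.
have key3 : 2 * K * q <= 2 * K * (eps * rho ^+ n / (2 * K + 1)).
  by apply: ler_wpM2l => //; rewrite mulr_ge0.
have key4 : 2 * K * (eps * rho ^+ n / (2 * K + 1)) <= eps * rho ^+ n.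
  have hp : 0 < 2 * K + 1 by lra.
  have ha : 0 < eps * rho ^+ n by rewrite mulr_gt0.
  rewrite mulrA ler_pdivrMr //; nra.
have : `|b n| * rho ^+ n <= eps * rho ^+ n by lra.
by rewrite ler_pM2r.
Qed.

End PS.


Section Cont.
Context {R : realType}.

Lemma ps_all_zero (a : nat -> R) (x : R) :
  (forall n, a n = 0) ->
  (fun N : nat => \sum_(0 <= n < N) a n * x ^+ n) = (fun _ => 0).
Proof.
by move=> H; apply: funext => N; apply: big1 => i _; rewrite H mul0r.
Qed.

Lemma analytic_cont (h : R -> R) : real_analytic h ->
  (forall s, 0 <= s -> s <= 1 -> h s = 0) -> forall s, 0 <= s -> h s = 0.
Proof.
move=> Ha H01 s s0.
have [//|hs] := eqVneq (h s) 0; exfalso.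
have s1 : 1 < s.
  rewrite ltNge; apply/negP => s1; move: hs; rewrite H01 //; by rewrite eqxx.
pose S := [set T | 1 <= T /\ T <= s /\ forall y, 0 <= y -> y <= T -> h y = 0].
have S1 : S 1.
  split => //; split; first exact: ltW.
  by move=> y y0 y1; apply: H01.
have hS : has_sup S.
  split; first by exists 1.
  by exists s => T [_ []].
pose T0 := sup S.
have T01 : 1 <= T0 by apply: sup_upper_bound.
have T0s : T0 <= s.
  apply: ge_sup; first by exists 1.
  by move=> T [_ []].
have below : forall y, 0 <= y -> y < T0 -> h y = 0.
  move=> y y0 yT.
  have ty : 0 < T0 - y by rewrite subr_gt0.
  have [e [_ [_ He]] ye] := sup_adherent ty hS.
  apply: He => //; rewrite -/T0 in ye; lra.
have [r [r0 [a Ha0]]] := Ha T0.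
have az : forall n, a n = 0.
  apply: (@ps_zero _ a r (Num.min r 1) (fun x => h (T0 + x))) => //.
  - by rewrite lt_min r0 ltr01.
  - move=> x xr; have := Ha0 (T0 + x).
    have e : T0 + x - T0 = x by rewrite addrC addKr.
    by rewrite e; apply.
  - move=> x x1 x0; apply: below; last by lra.
    have : Num.min r 1 <= 1 by rewrite ge_min lexx orbT.
    lra.
have near0 : forall t, `|t - T0| < r -> h t = 0.
  move=> t tr; have := Ha0 t tr.
  rewrite ps_all_zero // => hc.
  by rewrite -(cvg_lim _ hc) ?lim_cst.
have [sr|rs] := ltP s (T0 + r).
  by move: hs; rewrite near0 ?eqxx // ger0_norm; lra.
have : S (T0 + r / 2).
  split; first lra.
  split; first lra.
  move=> y y0 yT.
  have [yl|yg] := ltP y T0; first exact: below.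
  apply: near0; rewrite ger0_norm; lra.
move/(sup_upper_bound hS); rewrite -/T0; lra.
Qed.

Lemma analytic_sub_affine (g : R -> R) (c0 c1 : R) : real_analytic g ->
  real_analytic (fun t => g t - (c0 + c1 * t)).
Proof.
move=> Ha t0; have [r [r0 [a Ha0]]] := Ha t0.
exists r; split => //.
pose c n := if n == 0%N then c0 + c1 * t0 else if n == 1%N then c1 else 0.
exists (fun n => a n - c n) => t tr.
have e : (fun N : nat => \sum_(0 <= n < N) (a n - c n) * (t - t0) ^+ n) =
   (fun N : nat => \sum_(0 <= n < N) a n * (t - t0) ^+ n) -
   (fun N : nat => \sum_(0 <= n < N) c n * (t - t0) ^+ n).
  apply: funext => N.
  have -> : ((fun N : nat => \sum_(0 <= n < N) a n * (t - t0) ^+ n) -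
   (fun N : nat => \sum_(0 <= n < N) c n * (t - t0) ^+ n)) N =
   \sum_(0 <= n < N) a n * (t - t0) ^+ n - \sum_(0 <= n < N) c n * (t - t0) ^+ n by [].
  by rewrite -sumrB; apply: eq_bigr => i _; rewrite mulrBl.
rewrite e; apply: cvgB; first exact: Ha0.
apply: cvg_near_cst; exists 2%N => // N /= N2.
rewrite big_ltn; last by apply: leq_trans N2.
rewrite big_ltn; last by [].
rewrite big1_seq; last first.
  move=> i /andP[_]; rewrite mem_index_iota => /andP[i2 _].
  rewrite /c; case: ifP => [/eqP i0|_]; first by rewrite i0 in i2.
  case: ifP => [/eqP i1|_]; first by rewrite i1 in i2.
  by rewrite mul0r.
rewrite /c /= expr0 expr1 mulr1 addr0; ring.
Qed.

End Cont.


Lemma lip_cont {R : realType} {X : normedModType R} (h : X -> R) :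
  (forall v w, h v - h w <= `|v - w|) -> continuous h.
Proof.
move=> H v; apply/cvgrPdist_lt => e e0.
apply/nbhs_ballP; exists e => // w.
rewrite -ball_normE /ball_ /= => hw.
apply: le_lt_trans hw; rewrite ler_norml H andbT.
have := H w v; rewrite distrC; lra.
Qed.

Section UFun.
Context {R : realType} {X : normedModType R}.
Variable u : X.

Definition Uset (v : X) := [set e : R | exists s : R, e = s * `|u| - `|v + s *: u|].
Definition U (v : X) : R := - sup (Uset v).

Lemma Uset_ub v e : Uset v e -> e <= `|v|.
Proof.
move=> [s ->].
have h1 : s * `|u| <= `|s *: u| by rewrite normrZ ler_wpM2r // real_ler_norm ?num_real.
have h2 : `|s *: u| <= `|v + s *: u| + `|v|.
  by have := ler_normB (v + s *: u) v; rewrite addrAC subrr add0r.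
lra.
Qed.

Lemma Uset_has_sup v : has_sup (Uset v).
Proof.
split; first by exists (0 * `|u| - `|v + 0 *: u|), 0.
by exists `|v| => e /Uset_ub.
Qed.

Lemma U_le v s : U v <= `|v + s *: u| - s * `|u|.
Proof.
rewrite /U lerNl opprB.
by apply: sup_upper_bound; [exact: Uset_has_sup | exists s].
Qed.

Lemma U_glb v c : (forall s, c <= `|v + s *: u| - s * `|u|) -> c <= U v.
Proof.
move=> H; rewrite /U lerNr; apply: ge_sup.
  by exists (0 * `|u| - `|v + 0 *: u|), 0.
by move=> e [s ->]; have := H s; lra.
Qed.

Lemma U_ge v : - `|v| <= U v.
Proof.
rewrite /U lerN2; apply: ge_sup.
  by exists (0 * `|u| - `|v + 0 *: u|), 0.
by move=> e /Uset_ub.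
Qed.

Lemma U_sub v w : U (v + w) <= U v + U w.
Proof.
suff : U (v + w) - U w <= U v by lra.
apply: U_glb => s.
suff : U (v + w) - (`|v + s *: u| - s * `|u|) <= U w by lra.
apply: U_glb => s'.
have h := U_le (v + w) (s + s').
have e : v + w + (s + s') *: u = (v + s *: u) + (w + s' *: u).
  by rewrite scalerDl addrACA.
rewrite e in h.
have := ler_normD (v + s *: u) (w + s' *: u).
lra.
Qed.

Lemma U_hom (c : R) v : 0 < c -> U (c *: v) <= c * U v.
Proof.
move=> c0; rewrite -ler_pdivrMl //.
apply: U_glb => s.
rewrite ler_pdivrMl //.
have := U_le (c *: v) (c * s).
have e : c *: v + (c * s) *: u = c *: (v + s *: u) by rewrite scalerDr scalerA.
rewrite e normrZ gtr0_norm //.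
have -> : c * (`|v + s *: u| - s * `|u|) = c * `|v + s *: u| - c * s * `|u| by ring.
by [].
Qed.

Lemma U_homW (c : R) v : 0 <= c -> U (c *: v) <= c * U v.
Proof.
rewrite le_eqVlt => /orP[/eqP <-|]; last exact: U_hom.
by rewrite scale0r mul0r; have := U_le 0 0; rewrite scale0r addr0 normr0 mul0r subr0.
Qed.

Lemma U_lip v w : U v - U w <= `|v - w|.
Proof.
have := U_sub w (v - w); rewrite addrC subrK.
have := U_le (v - w) 0; rewrite scale0r addr0 mul0r subr0.
lra.
Qed.

Lemma U_cont : continuous U.
Proof. exact: lip_cont U_lip. Qed.

End UFun.


Section Line.
Context {R : realType} {X : normedModType R}.

Lemma vecid (a b : X) (s : R) : b + s *: (a - b) = a + (1 - s) *: (b - a).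
Proof.
by rewrite scalerBl scale1r -opprB scalerN addrA [a + _]addrC subrK.
Qed.

Lemma line_fix (f : X -> X) (a b : X) (phi : X -> R) :
  nonexpansive f -> weakly_real_analytic f -> f a = a -> f b = b ->
  dual_functional phi -> (forall v, phi v <= `|v|) -> phi (b - a) = `|b - a| ->
  forall s, phi (f (a + s *: (b - a))) = phi a + s * `|b - a|.
Proof.
move=> ne wa fa fb dphi phile phiu.
case: (dphi) => lin _.
have phi0 : phi 0 = 0.
  by have := lin 1 0 0; rewrite scale1r addr0 mul1r; lra.
have phiD x y : phi (x + y) = phi x + phi y.
  by have := lin 1 x y; rewrite scale1r mul1r.
have phiZ c x : phi (c *: x) = c * phi x.
  by have := lin c x 0; rewrite !addr0 phi0 addr0.
have phiN x : phi (- x) = - phi x by rewrite -scaleN1r phiZ mulN1r.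
have phiB x y : phi (x - y) = phi x - phi y by rewrite phiD phiN.
have phib : phi b = phi a + `|b - a| by move: phiu; rewrite phiB; lra.
have seg : forall s, 0 <= s -> s <= 1 ->
    phi (f (a + s *: (b - a))) = phi a + s * `|b - a|.
  move=> s s0 s1.
  set q := a + s *: (b - a).
  have h1 : `|f q - a| <= s * `|b - a|.
    rewrite -{1}fa; apply: le_trans (ne _ _) _.
    by rewrite /q addrAC subrr add0r normrZ ger0_norm.
  have h2 : `|b - f q| <= (1 - s) * `|b - a|.
    rewrite -{1}fb; apply: le_trans (ne _ _) _.
    have -> : b - q = (1 - s) *: (b - a).
      by rewrite /q scalerBl scale1r opprD addrA.
    by rewrite normrZ ger0_norm // subr_ge0.
  have := phile (f q - a); have := phile (b - f q); rewrite !phiB.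
  lra.
have H1 := analytic_cont (analytic_sub_affine (phi a) (`|b - a|) (wa a (b - a) phi dphi)).
have fw : forall s, 0 <= s -> phi (f (a + s *: (b - a))) = phi a + s * `|b - a|.
  move=> s s0.
  have hz : forall t, 0 <= t -> t <= 1 ->
      phi (f (a + t *: (b - a))) - (phi a + `|b - a| * t) = 0.
    by move=> t t0 t1; rewrite seg // [t * _]mulrC subrr.
  have := H1 hz s s0.
  move/eqP; rewrite subr_eq0 => /eqP ->.
  by rewrite mulrC.
have H2 := analytic_cont (analytic_sub_affine (phi b) (- `|b - a|) (wa b (a - b) phi dphi)).
move=> s.
have [s0|s0] := leP 0 s; first exact: fw.
have hz : forall t, 0 <= t -> t <= 1 ->
    phi (f (b + t *: (a - b))) - (phi b + - `|b - a| * t) = 0.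
  move=> t t0 t1; rewrite vecid seg; last 2 first.
  - by rewrite subr_ge0.
  - by rewrite lerBlDr lerDl.
  apply/eqP; rewrite subr_eq0 phib; apply/eqP; ring.
have h1s : 0 <= 1 - s by lra.
have := H2 hz (1 - s) h1s.
rewrite vecid (_ : 1 - (1 - s) = s); last by ring.
move/eqP; rewrite subr_eq0 => /eqP ->.
rewrite phib; ring.
Qed.

End Line.

Unset Implicit Arguments. Set Strict Implicit.

Theorem theorem5p3 (R : realType) (X : completeNormedModType R) (f : X -> X) :
  @fixed_point_property R X ->
  nonexpansive f ->
  weakly_real_analytic f ->
  (exists x y : X, f x = x /\ f y = y /\ x <> y) ->
  ~ (exists M : R, forall x : X, f x = x -> `|x| <= M).
Proof.
move=> FPP ne wa [a [b [fa [fb ab]]]] [M HM].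
set u := b - a.
have d0 : 0 < `|u|.
  rewrite normr_gt0 /u subr_eq0; apply/eqP => e; apply: ab; by rewrite e.
have Ma := HM a fa.
have M0 : 0 <= M by apply: le_trans Ma.
pose T := 2 * M + 1.
pose C := [set w : X | `|a - w| <= T /\ U u (a - w) <= - T].
have [p Cp fp] : exists2 p, C p & f p = p.
apply: FPP.
- pose t := T / `|u|.
  have tT : t * `|u| = T by rewrite /t divfK // gt_eqF.
  have t0 : 0 <= t by rewrite /t divr_ge0 // ?ltW //; rewrite /T; lra.
  exists (a + t *: u); split.
  + by rewrite opprD addrA subrr add0r normrN normrZ ger0_norm // tT.
  + rewrite opprD addrA subrr add0r.
    have := U_le u (- (t *: u)) t; rewrite addNr normr0 tT; lra.
- have -> : C = (fun w => `|a - w|) @^-1` [set z | z <= T] `&`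
                (fun w => U u (a - w)) @^-1` [set z | z <= - T] by [].
  apply: closedI.
  + have hc : continuous (fun w : X => `|a - w|).
      apply: lip_cont => v w.
      have := ler_normD (a - w) (w - v).
      rewrite addrA subrK (distrC w v); lra.
    have := (continuous_closedP _).1 hc [set z | z <= T].
    apply; exact: closed_le.
  + have hc : continuous (fun w : X => U u (a - w)).
      apply: lip_cont => v w.
      have := U_lip u (a - v) (a - w).
      have e : a - v - (a - w) = w - v by rewrite opprB addrC addrA subrK.
      by rewrite e (distrC w v).
    have := (continuous_closedP _).1 hc [set z | z <= - T].
    apply; exact: closed_le.
- exists (`|a| + T) => w [h1 _].
  have := ler_normB a (a - w); rewrite opprB addrC subrK; lra.
- move=> w1 w2 [h1 h2] [h3 h4] l l0 l1.
  have e : a - (l *: w1 + (1 - l) *: w2) = l *: (a - w1) + (1 - l) *: (a - w2).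
    by rewrite !scalerBr addrACA -scalerDl (addrC l) subrK scale1r opprD.
  have l1' : 0 <= 1 - l by lra.
  rewrite /C /= e; split.
  + apply: le_trans (ler_normD _ _) _.
    rewrite !normrZ !ger0_norm //.
    have := ler_wpM2l l0 h1; have := ler_wpM2l l1' h3; lra.
  + apply: le_trans (U_sub _ _ _) _.
    have := U_homW u (a - w1) l0; have := U_homW u (a - w2) l1'.
    have := ler_wpM2l l0 h2; have := ler_wpM2l l1' h4; lra.
- move=> _ [w [h1 h2] <-]; split.
  + by rewrite -{1}fa; apply: le_trans (ne a w) h1.
  + have [phi [lin phiU phiv]] := HB_exists (U_sub u) (U_hom u) (a - f w).
    have phi0 : phi 0 = 0.
      by have := lin 1 0 0; rewrite scale1r addr0 mul1r; lra.
    have phiD x y : phi (x + y) = phi x + phi y.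
      by have := lin 1 x y; rewrite scale1r mul1r.
    have phiZ c x : phi (c *: x) = c * phi x.
      by have := lin c x 0; rewrite !addr0 phi0 addr0.
    have phiN x : phi (- x) = - phi x by rewrite -scaleN1r phiZ mulN1r.
    have phiB x y : phi (x - y) = phi x - phi y by rewrite phiD phiN.
    have phile v : phi v <= `|v|.
      apply: le_trans (phiU v) _.
      by have := U_le u v 0; rewrite scale0r addr0 mul0r subr0.
    have phiu : phi (b - a) = `|b - a|.
      rewrite -/u; apply/eqP; rewrite eq_le phile /=.
      have := le_trans (phiU (- u)) (U_le u (- u) 1).
      by rewrite scale1r addNr normr0 mul1r phiN; lra.
    have dphi : dual_functional phi.
      split => //; apply: lip_cont => v v'.
      by rewrite -phiB.
    have line := line_fix ne wa fa fb dphi phile phiu.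
    rewrite -phiv.
    apply: le_trans h2.
    apply: U_glb => s.
    have := line s; rewrite -/u => hl.
    have hn := ne (a + s *: u) w.
    have hp := phile (f (a + s *: u) - f w).
    rewrite phiB in hp.
    have e : a + s *: u - w = a - w + s *: u by rewrite addrAC.
    rewrite e in hn.
    rewrite phiB; lra.
- by move=> x y _ _; exact: ne.
case: Cp => h1 h2.
have := U_ge u (a - p).
have := HM p fp.
have := ler_normB a p.
rewrite /T in h2; lra.
Qed.
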